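(* Let $\mathcal X,\mathcal C,d,G_{\mathcal C}$ be as in the context, let $\sigma$ be any cycle decomposition of $G_{\mathcal C}$, $\epsilon\in[0,1]$, $N\ge1$. With $\mathcal B_{\mathcal C}(\sigma)$ of size $M=2^{|\sigma|}$, $\mathbb P_0=p_0^N$ and $\mathbb P_1=\frac1M\sum_{b\in\mathcal B_{\mathcal C}(\sigma)}q_{b,\epsilon}^N$, $$\chi^2(\mathbb P_1,\mathbb P_0)+1\le\exp\Big(\frac{N^2\epsilon^4}{2d}\alpha(\sigma)\Big).$$
   Context: $\mathcal X$ is a finite set of $n$ items, $\mathcal C$ a collection of $m\ge n$ distinct subsets of $\mathcal X$ of size at least 2, $d=\sum_{C\in\mathcal C}|C|$; coordinates are indexed by pairs $(x,C)$, $x\in C\in\mathcal C$. $G_{\mathcal C}$ is the bipartite graph with item-nodes $\mathcal X$, set-nodes $\mathcal C$, and an edge $(x,C)$ iff $x\in C$. Standing assumptions: $G_{\mathcal C}$ connected, every $|C|$ even, every item in an even number of sets. A cycle decomposition $\sigma$ partitions the edges of $G_{\mathcal C}$ into edge-disjoint simple cycles $\sigma_1,\dots,\sigma_{|\sigma|}$; $\alpha(\sigma)=\frac1d\sum_i|\sigma_i|^2$ with $|\sigma_i|$ the number of edges of $\sigma_i$. $\mathcal B_{\mathcal C}(\sigma)$ is the set of $2^{|\sigma|}$ vectors $b\in\{-1,1\}^d$ obtained by choosing independently one of the two cyclic orientations of each $\sigma_i$ and setting $b_{(x,C)}=1$ if edge $(x,C)$ is oriented from $x$ to $C$, $-1$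 otherwise. $p_0$ is uniform on the $d$ pairs; $q_{b,\epsilon}((x,C))=\frac1d+\frac{\epsilon b_{(x,C)}}d$; $\mu^N$ denotes the law of $N$ i.i.d. samples; $\chi^2(P,Q)=\mathbb E_Q[(dP/dQ)^2]-1$. *)

(* Defs.v *)
From HB Require Import structures.
From mathcomp Require Import all_boot all_order all_algebra.
From mathcomp Require Import reals sequences exp.
Set Implicit Arguments. Unset Strict Implicit. Unset Printing Implicit Defensive.
Import Order.TTheory GRing.Theory Num.Theory.
Local Open Scope ring_scope.

Section Defs.
Variable X : finType.
Variable CC : {set {set X}}.

Definition is_node (v : X + {set X}) : bool :=
  match v with inl _ => true | inr A => A \in CC end.

Definition gadj (u v : X + {set X}) : bool :=
  match u, v with
  | inl x, inr A => (A \in CC) && (x \in A)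
  | inr A, inl x => (A \in CC) && (x \in A)
  | _, _ => false
  end.

Definition G_connected : Prop :=
  forall u v, is_node u -> is_node v -> connect gadj u v.

(* coordinates: pairs (x, S) with x \in S \in CC, i.e. edges of G_C *)
Definition is_edge (p : X * {set X}) : bool := (p.2 \in CC) && (p.1 \in p.2).
Definition Edge := {p : X * {set X} | is_edge p}.

(* d = sum_{S in CC} |S| = number of edges *)
Definition dd : nat := \sum_(S in CC) #|S|.

(* A simple cycle of the bipartite graph G_C of length 2k (k >= 2) is
   x_0 - C_0 - x_1 - C_1 - ... - x_{k-1} - C_{k-1} - x_0, with distinct items
   x_i and distinct sets C_i; it is encoded by the sequence of pairs (x_i, C_i). *)
Definition cyc_items (c : seq (X * {set X})) : seq X := map fst c.
Definition cyc_sets (c : seq (X * {set X})) : seq {set X} := map snd c.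
(* pairs ((x_i, C_i), x_{i+1 mod k}) *)
Definition cyc_steps (c : seq (X * {set X})) := zip c (rot 1 (cyc_items c)).

Definition is_simple_cycle (c : seq (X * {set X})) : bool :=
  [&& (2 <= size c)%N, uniq (cyc_items c), uniq (cyc_sets c) &
      all (fun q : (X * {set X}) * X =>
             [&& q.1.2 \in CC, q.1.1 \in q.1.2 & q.2 \in q.1.2]) (cyc_steps c)].

(* edges (x_i, C_i): oriented x -> C when the cycle is traversed
   x_0 -> C_0 -> x_1 -> ... (the "reference" orientation) *)
Definition cyc_fwd_edges (c : seq (X * {set X})) : seq (X * {set X}) := c.
(* edges (x_{i+1}, C_i): oriented C -> x in the reference orientation *)
Definition cyc_bwd_edges (c : seq (X * {set X})) : seq (X * {set X}) :=
  [seq (q.2, q.1.2) | q <- cyc_steps c].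
Definition cyc_edges (c : seq (X * {set X})) : seq (X * {set X}) :=
  cyc_fwd_edges c ++ cyc_bwd_edges c.
Definition cyc_len (c : seq (X * {set X})) : nat := size (cyc_edges c).

Definition is_cycle_decomposition (sigma : seq (seq (X * {set X}))) : Prop :=
  all is_simple_cycle sigma /\
  (forall p : X * {set X}, count (fun c => p \in cyc_edges c) sigma = (is_edge p : nat)).

Variable R : realType.

Definition alpha (sigma : seq (seq (X * {set X}))) : R :=
  (dd%:R)^-1 * \sum_(c <- sigma) ((cyc_len c)%:R ^+ 2).

(* a vector b in {-1,1}^d is encoded as b : {ffun Edge -> bool},
   true <-> +1 (edge oriented from x to C), false <-> -1 *)
Definition sgn (b : bool) : R := if b then 1 else -1.

(* orientation choice s_i = true: reference orientation of sigma_i;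
   s_i = false: the reverse orientation *)
Definition b_of (sigma : seq (seq (X * {set X})))
    (s : (size sigma).-tuple bool) : {ffun Edge -> bool} :=
  [ffun e : Edge =>
     let i := find (fun c => val e \in cyc_edges c) sigma in
     (val e \in cyc_fwd_edges (nth [::] sigma i)) == nth true s i].

Definition Bset (sigma : seq (seq (X * {set X}))) : {set {ffun Edge -> bool}} :=
  [set b_of s | s in {: (size sigma).-tuple bool}].

Definition p0 (e : Edge) : R := (dd%:R)^-1.
Definition q_b (b : {ffun Edge -> bool}) (eps : R) (e : Edge) : R :=
  (dd%:R)^-1 + eps * sgn (b e) / dd%:R.

Definition iid (N : nat) (p : Edge -> R) (w : {ffun 'I_N -> Edge}) : R :=
  \prod_(j < N) p (w j).

Definition PP0 (N : nat) (w : {ffun 'I_N -> Edge}) : R := iid p0 w.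

Definition PP1 (sigma : seq (seq (X * {set X}))) (eps : R) (N : nat)
    (w : {ffun 'I_N -> Edge}) : R :=
  ((2 ^ size sigma)%:R)^-1 * \sum_(b in Bset sigma) iid (q_b b eps) w.

End Defs.

Definition chi2 (R : realType) (T : finType) (P Q : T -> R) : R :=
  \sum_(w : T) Q w * (P w / Q w) ^+ 2 - 1.

(* Main.v *)
Require Import Defs.
From HB Require Import structures.
From mathcomp Require Import all_boot all_order all_algebra.
From mathcomp Require Import reals sequences exp.
From mathcomp Require Import zify ring lra.
From mathcomp Require Import boolp classical_sets topology normedtype.
Import Order.TTheory GRing.Theory Num.Theory.
Import numFieldNormedType.Exports.
Local Open Scope ring_scope.
Set Implicit Arguments. Unset Strict Implicit. Unset Printing Implicit Defensive.

Lemma fact_double_ge m : (2 ^ m * m`! <= (m.*2)`!)%N.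
Proof.
elim: m => [//|m IH].
rewrite doubleS !factS expnS.
have H1 : (2 * m.+1 <= (m.*2).+2)%N by lia.
have H2 : (1 <= (m.*2).+1)%N by lia.
have := leq_mul H1 (leq_mul H2 IH).
rewrite mul1n => H; apply: leq_trans H.
rewrite !mulnA; lia.
Qed.

Section Cosh.
Variable R : realType.

Definition tc (x : R) k := exp_coeff x k + exp_coeff (- x) k.

Lemma tc_even (x : R) m : tc x m.*2 = 2 * (x ^+ m.*2 / (m.*2)`!%:R).
Proof.
rewrite /tc /exp_coeff /= exprNn -signr_odd odd_double expr0 mul1r.
by rewrite mulr2n mulrDl !mul1r.
Qed.

Lemma tc_odd (x : R) m : tc x (m.*2).+1 = 0.
Proof.
rewrite /tc /exp_coeff /= exprNn -signr_odd /= odd_double /= expr1 mulN1r.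
by rewrite mulNr addrN.
Qed.

Lemma tc_ge0 (x : R) k : 0 <= tc x k.
Proof.
rewrite -(odd_double_half k); case: (odd k) => /=.
  by rewrite add1n tc_odd.
rewrite add0n tc_even mulr_ge0 // mulr_ge0 //.
  by rewrite -mul2n exprM exprn_ge0 // sqr_ge0.
by rewrite invr_ge0 ler0n.
Qed.

Lemma tc_sum_le (x : R) m :
  \sum_(0 <= k < m.*2) tc x k <= 2 * series (exp_coeff (x ^+ 2 / 2)) m.
Proof.
elim: m => [|m IH]; first by rewrite /series /= !big_geq // mulr0.
rewrite doubleS big_nat_recr // big_nat_recr //= tc_odd addr0.
rewrite /series /= big_nat_recr //= mulrDr lerD //.
rewrite tc_even ler_pM2l // /exp_coeff /=.
rewrite exprMn exprVn -exprM mul2n.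
have hx : 0 <= x ^+ m.*2 by rewrite -mul2n exprM exprn_ge0 // sqr_ge0.
rewrite -mulrA ler_wpM2l //.
rewrite -invfM lef_pV2 ?posrE ?mulr_gt0 ?exprn_gt0 ?ltr0n ?fact_gt0 //.
by rewrite -natrX -natrM ler_nat fact_double_ge.
Qed.

Lemma cosh_le (x : R) : expR x + expR (- x) <= 2 * expR (x ^+ 2 / 2).
Proof.
have c1 := is_cvg_series_exp_coeff x; have c2 := is_cvg_series_exp_coeff (- x).
have c3 := is_cvg_series_exp_coeff (x ^+ 2 / 2).
have E : limn (fun n => (series (exp_coeff x) n + series (exp_coeff (- x)) n : R)) =
   limn (series (exp_coeff x)) + limn (series (exp_coeff (- x))).
  by apply: cvg_lim => //; exact: (cvgD c1 c2).
rewrite /expR -E.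
apply: limr_le; first exact: (is_cvgD c1 c2).
apply: nearW => m /=.
have -> : series (exp_coeff x) m + series (exp_coeff (- x)) m = \sum_(0 <= k < m) tc x k.
  by rewrite /series /= -big_split.
have nd : nondecreasing_seq (fun n => \sum_(0 <= k < n) tc x k).
  by apply: nondecreasing_series => n _ _; exact: tc_ge0.
apply: le_trans (nd m m.*2 _) _; first by rewrite -addnn leq_addr.
apply: le_trans (tc_sum_le x m) _.
rewrite ler_pM2l //.
apply: nondecreasing_cvgn_le => //.
apply: nondecreasing_series => n _ _; apply: exp_coeff_ge0.
by rewrite mulr_ge0 // ?sqr_ge0 // invr_ge0 ler0n.
Qed.
End Cosh.

Section Comb.
Variables (X : finType) (CC : {set {set X}}).

Lemma cyc_facts c : is_simple_cycle CC c ->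
  [/\ uniq c, uniq (cyc_bwd_edges c), size (cyc_bwd_edges c) = size c,
      all (is_edge CC) (cyc_edges c) & forall p, p \in c -> p \notin cyc_bwd_edges c].
Proof.
case/and4P => Hs Hui Hus Hall.
set r := rot 1 (cyc_items c).
have sr : size r = size c by rewrite size_rot size_map.
have Hz : unzip1 (zip c r) = c by rewrite unzip1_zip // sr.
have Hb2 : map snd (cyc_bwd_edges c) = cyc_sets c.
  rewrite /cyc_bwd_edges /cyc_steps -/r -map_comp /cyc_sets -{2}Hz -map_comp.
  by apply: eq_map.
split.
- exact: map_uniq Hui.
- by apply: (@map_uniq _ _ snd); rewrite Hb2.
- by rewrite size_map size_zip sr minnn.
- rewrite all_cat; apply/andP; split.
    rewrite /cyc_fwd_edges -Hz all_map; apply: sub_all Hall => q /and3P[h1 h2 _].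
    by rewrite /= /is_edge h1 h2.
  rewrite /cyc_bwd_edges all_map; apply: sub_all Hall => q /and3P[h1 _ h3].
  by rewrite /= /is_edge /= h1 h3.
move=> p pc; apply/negP => /mapP [q qz pq].
have [i ilt qi] : exists2 i, (i < size c)%N & q = (nth q.1 c i, nth q.2 r i).
  exists (index q (zip c r)).
    have : (index q (zip c r) < size (zip c r))%N by rewrite index_mem.
    by rewrite size_zip sr minnn.
  by rewrite -nth_zip // nth_index.
move: pc; rewrite pq qi /= => pc.
set j := index (nth q.2 r i, (nth q.1 c i).2) c in pc.
have jlt : (j < size c)%N by rewrite index_mem.
have nj : nth q.1 c j = (nth q.2 r i, (nth q.1 c i).2) by rewrite nth_index.
have eji : j = i.
  apply/eqP; rewrite -(nth_uniq q.1.2 _ _ Hus) ?size_map //.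
  by rewrite /cyc_sets !(nth_map q.1) // nj.
rewrite eji in nj.
have Hxi : nth q.2 r i = nth q.2 (cyc_items c) i by rewrite /cyc_items (nth_map q.1) // nj.
move: Hxi Hui Hs ilt; rewrite /r.
case: c {qz pc Hz Hb2 Hus Hall pq qi j jlt nj eji sr r} => [//|a c'] /=.
rewrite rot1_cons nth_rcons size_map => Hxi Hui Hs ilt.
case: ltnP Hxi => hi.
  rewrite -/(nth q.2 (a.1 :: map fst c') i.+1) => Hxi.
  have := nth_uniq q.2 (_ : (i < size (a.1 :: map fst c'))%N) (_ : (i.+1 < size (a.1 :: map fst c'))%N) Hui.
  rewrite /= size_map Hxi eqxx => /(_ ilt hi).
  by rewrite ltn_eqF.
have ei : i = size c' by lia.
have hp : (0 < size c')%N by lia.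
rewrite ei eqxx -(prednK hp) /= => Hxi.
move: Hui => /andP[Hn _]; move: Hn; rewrite Hxi mem_nth //.
by rewrite /cyc_items size_map; lia.
Qed.

Lemma card_Edge_in (l : seq (X * {set X})) : uniq l -> all (is_edge CC) l ->
  #|[pred e : Edge CC | val e \in l]| = size l.
Proof.
move=> ul al; rewrite -(card_uniqP ul) -(card_image val_inj).
apply: eq_card => p; apply/fintype.imageP/idP.
  by case=> e He ->.
move=> pl; have pe : is_edge CC p := allP al p pl.
by exists (exist _ p pe).
Qed.

Lemma inner_sum (R : numFieldType) c (f : bool -> R) : is_simple_cycle CC c ->
  \sum_(e : Edge CC | val e \in cyc_edges c) f (val e \in c) = (size c)%:R * (f true + f false).
Proof.
move=> /cyc_facts [uc ub sb ae dj].
rewrite (bigID (fun e : Edge CC => val e \in c)).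
have E1 : \sum_(e : Edge CC | (val e \in cyc_edges c) && (val e \in c)) f (val e \in c)
   = \sum_(e in [pred e : Edge CC | val e \in c]) f true.
  apply: eq_big => e; first by rewrite inE /cyc_edges mem_cat /cyc_fwd_edges; case: (val e \in c); rewrite ?andbF.
  by case/andP => _ ->.
have E2 : \sum_(e : Edge CC | (val e \in cyc_edges c) && ~~ (val e \in c)) f (val e \in c)
   = \sum_(e in [pred e : Edge CC | val e \in cyc_bwd_edges c]) f false.
  apply: eq_big => e.
    rewrite inE /cyc_edges mem_cat /cyc_fwd_edges.
    case E: (val e \in c) => /=; last by rewrite andbT.
    by rewrite (negPf (dj _ E)).
  by case/andP => _ /negPf ->.
apply: etrans (congr2 +%R E1 E2) _.
rewrite !sumr_const.
have [ae1 ae2] : all (is_edge CC) c /\ all (is_edge CC) (cyc_bwd_edges c).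
  by move: ae; rewrite all_cat => /andP[].
have h1 := card_Edge_in uc ae1.
have h2 := card_Edge_in ub ae2.
move: h1 h2; set A := #|_|; set B := #|_|; move=> h1 h2; rewrite h1 h2.
by rewrite sb mulrDr !mulr_natl.
Qed.

Variable sigma : seq (seq (X * {set X})).
Hypothesis Hdec : is_cycle_decomposition CC sigma.

Definition idx (e : Edge CC) := find (fun c => val e \in cyc_edges c) sigma.

Lemma idx_lt e : (idx e < size sigma)%N.
Proof.
rewrite /idx -has_find has_count (Hdec.2 (val e)).
by rewrite (valP e).
Qed.

Lemma idx_eq e i : (i < size sigma)%N ->
  (idx e == i) = (val e \in cyc_edges (nth [::] sigma i)).
Proof.
move=> ilt; apply/eqP/idP.
  move=> <-; apply: (@nth_find _ [::] (fun c => val e \in cyc_edges c)).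
  by rewrite has_find idx_lt.
move=> Hi.
have ji : (idx e <= i)%N.
  rewrite leqNgt; apply/negP => /(before_find [::]) /=; by rewrite Hi.
case: (ltngtP (idx e) i) => // hj.
  exfalso.
  have := Hdec.2 (val e); rewrite (valP e) -(cat_take_drop i sigma) count_cat.
  have h1 : (0 < count (fun c => val e \in cyc_edges c) (take i sigma))%N.
    rewrite -has_count; apply/(has_nthP [::]); exists (idx e).
      by rewrite size_take ilt.
    rewrite nth_take //; apply: (@nth_find _ [::] (fun c => val e \in cyc_edges c)).
    by rewrite has_find idx_lt.
  have h2 : (0 < count (fun c => val e \in cyc_edges c) (drop i sigma))%N.
    rewrite -has_count; apply/(has_nthP [::]); exists 0%N.
      by rewrite size_drop subn_gt0.
    by rewrite nth_drop addn0.
  move: h1 h2 => /= h1 h2 H; lia.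
by move: ji; rewrite leqNgt hj.
Qed.

Lemma sum_Edge_part (R : numFieldType) (F : Edge CC -> R) :
  \sum_e F e = \sum_(i < size sigma) \sum_(e | val e \in cyc_edges (nth [::] sigma i)) F e.
Proof.
rewrite [RHS](eq_bigr (fun i : 'I_(size sigma) => \sum_e (if idx e == i then F e else 0))); last first.
  by move=> i _; rewrite big_mkcond /=; apply: eq_bigr => e _; rewrite idx_eq.
rewrite exchange_big /=; apply: eq_bigr => e _.
rewrite (bigD1 (Ordinal (idx_lt e))) //= eqxx big1 ?addr0 // => i /negPf.
by rewrite -val_eqE /= eq_sym => ->.
Qed.

End Comb.

Lemma sum_tuple2 (R : comRingType) n (G : 'I_n -> bool -> bool -> R) :
  \sum_(s : n.-tuple bool) \sum_(t : n.-tuple bool) \prod_(i < n) G i (tnth s i) (tnth t i)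
  = \prod_(i < n) \sum_(a : bool) \sum_(b : bool) G i a b.
Proof.
have re (H : n.-tuple bool -> R) :
    \sum_(s : n.-tuple bool) H s = \sum_(f : {ffun 'I_n -> bool}) H [tuple f i | i < n].
  apply: (reindex (fun f : {ffun 'I_n -> bool} => [tuple f i | i < n])).
  exists (fun s => [ffun i => tnth s i]) => f _.
    by apply/ffunP => i; rewrite ffunE tnth_mktuple.
  by apply: eq_from_tnth => i; rewrite tnth_mktuple ffunE.
rewrite re.
rewrite (eq_bigr (fun f : {ffun 'I_n -> bool} => \prod_(i < n) \sum_(b : bool) G i (f i) b)); last first.
  move=> f _; rewrite re bigA_distr_bigA /=; apply: eq_bigr => g _.
  by apply: eq_bigr => i _; rewrite !tnth_mktuple.
by rewrite bigA_distr_bigA.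
Qed.

Lemma sum_imset_le (R : numDomainType) (I J : finType) (h : I -> J) (A : {pred I})
   (F : J -> R) : (forall j, 0 <= F j) ->
  \sum_(j in [set h x | x in A]) F j <= \sum_(i in A) F (h i).
Proof.
move=> F0; rewrite (partition_big_imset h) /=.
apply: ler_sum => j /imsetP [i iA ->].
rewrite (bigD1 i) /=; last by rewrite iA eqxx.
by rewrite lerDl sumr_ge0.
Qed.

Lemma card_Edge (X : finType) (CC : {set {set X}}) : #|{: Edge CC}| = dd CC.
Proof.
rewrite card_sig /dd -sum1_card big_mkcond /=.
rewrite -(pair_bigA _ (fun (x : X) (S : {set X}) => if (S \in CC) && (x \in S) then 1%N else 0%N)) /=.
rewrite exchange_big /= [RHS]big_mkcond /=; apply: eq_bigr => S _.
case: (S \in CC) => /=; last by rewrite big1.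
by rewrite -sum1_card [RHS]big_mkcond.
Qed.

Section Beta.
Variables (X : finType) (CC : {set {set X}}) (R : realType) (sigma : seq (seq (X * {set X}))).
Hypothesis Hdec : is_cycle_decomposition CC sigma.

Lemma b_ofE (s : (size sigma).-tuple bool) e : b_of CC s e =
  ((val e \in nth [::] sigma (idx sigma e)) == nth true s (idx sigma e)).
Proof. by rewrite /b_of ffunE. Qed.

Lemma simple_nth i : (i < size sigma)%N -> is_simple_cycle CC (nth [::] sigma i).
Proof. by move=> h; apply: (allP Hdec.1); rewrite mem_nth. Qed.

Lemma b_ofE_in (s : (size sigma).-tuple bool) (i : 'I_(size sigma)) e : val e \in cyc_edges (nth [::] sigma i) ->
  b_of CC s e = ((val e \in nth [::] sigma i) == tnth s i).
Proof.
move=> He; rewrite b_ofE (tnth_nth true).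
by have /eqP -> : idx sigma e == i by rewrite (idx_eq Hdec).
Qed.

Lemma sum_beta (s : (size sigma).-tuple bool) : \sum_(e : Edge CC) sgn R (b_of CC s e) = 0.
Proof.
rewrite (sum_Edge_part Hdec) big1 // => i _.
rewrite (eq_bigr (fun e => sgn R ((val e \in nth [::] sigma i) == tnth s i))); last first.
  by move=> e He; rewrite (b_ofE_in s He).
rewrite (inner_sum (fun a => sgn R (a == tnth s i))) ?simple_nth //.
by case: (tnth s i); rewrite /sgn /= ?addrN ?addNr mulr0.
Qed.

Lemma sum_beta2 (s t : (size sigma).-tuple bool) : \sum_(e : Edge CC) sgn R (b_of CC s e) * sgn R (b_of CC t e) =
  \sum_(i < size sigma) sgn R (tnth s i) * sgn R (tnth t i) * (cyc_len (nth [::] sigma i))%:R.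
Proof.
rewrite (sum_Edge_part Hdec); apply: eq_bigr => i _.
rewrite (eq_bigr (fun e => sgn R ((val e \in nth [::] sigma i) == tnth s i) *
                           sgn R ((val e \in nth [::] sigma i) == tnth t i))); last first.
  by move=> e He; rewrite (b_ofE_in s He) (b_ofE_in t He).
rewrite (inner_sum (fun a => sgn R (a == tnth s i) * sgn R (a == tnth t i))) ?simple_nth //.
have [_ _ sb _ _] := cyc_facts (simple_nth (ltn_ord i)).
rewrite /cyc_len /cyc_edges size_cat sb /cyc_fwd_edges natrD.
by case: (tnth s i); case: (tnth t i); rewrite /sgn /=; ring.
Qed.

End Beta.

Section Main.
Variables (X : finType) (CC : {set {set X}}) (R : realType)
  (sigma : seq (seq (X * {set X}))) (eps : R) (N : nat).
Hypothesis Hdec : is_cycle_decomposition CC sigma.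
Hypothesis He0 : 0 <= eps.
Hypothesis He1 : eps <= 1.
Hypothesis HD : (0 < dd CC)%N.

Let Dr : R := (dd CC)%:R.
Let Dr_gt0 : 0 < Dr. Proof. by rewrite ltr0n. Qed.
Let Dr_neq0 : Dr != 0. Proof. by rewrite gt_eqF. Qed.
Let T := (size sigma).-tuple bool.
Let qs (s : T) := q_b (b_of CC s) eps.

Lemma q_ge0 (b : {ffun Edge CC -> bool}) e : 0 <= q_b b eps e.
Proof.
have -> : q_b b eps e = (1 + eps * sgn R (b e)) / Dr by rewrite /q_b mulrDl mul1r.
apply: divr_ge0; last exact: ltW Dr_gt0.
move: He0 He1; move: (eps) => x h0 h1.
case: (b e); rewrite /sgn; lra.
Qed.

Lemma powE (x : R) : x ^+ N = \prod_(j < N) x.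
Proof. by rewrite prodr_const card_ord. Qed.

Lemma step4 (s t : T) :
  \sum_(w : {ffun 'I_N -> Edge CC}) iid (qs s) w * iid (qs t) w * Dr ^+ N
  = (\sum_e qs s e * qs t e * Dr) ^+ N.
Proof.
rewrite [RHS]powE bigA_distr_bigA; apply: eq_bigr => w _.
by rewrite /iid powE -!big_split.
Qed.

Definition AA (s t : T) : R := \sum_(e : Edge CC) sgn R (b_of CC s e) * sgn R (b_of CC t e).

Lemma step5 (s t : T) :
  \sum_e qs s e * qs t e * Dr = 1 + eps ^+ 2 / Dr * AA s t.
Proof.
rewrite (eq_bigr (fun e => Dr^-1 + eps / Dr * sgn R (b_of CC s e) + eps / Dr * sgn R (b_of CC t e)
    + eps ^+ 2 / Dr * (sgn R (b_of CC s e) * sgn R (b_of CC t e)))); last first.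
  by move=> e _; rewrite /qs /q_b; field.
rewrite !big_split /= -!mulr_sumr !sum_beta // !mulr0 !addr0 sumr_const card_Edge.
by rewrite /AA -/Dr -[Dr^-1 *+ _]mulr_natr mulVf.
Qed.


Let lam : R := N%:R * (eps ^+ 2 / Dr).
Let L (i : 'I_(size sigma)) : R := (cyc_len (nth [::] sigma i))%:R.

Lemma step6 (s t : T) : (\sum_e qs s e * qs t e * Dr) ^+ N <=
  \prod_(i < size sigma) expR (lam * (sgn R (tnth s i) * sgn R (tnth t i) * L i)).
Proof.
have B0 : 0 <= \sum_e qs s e * qs t e * Dr.
  by apply: sumr_ge0 => e _; rewrite !mulr_ge0 ?q_ge0 ?ltW.
rewrite -expR_sum -mulr_sumr -(sum_beta2 R Hdec) -/(AA s t) /lam -mulrA expRM_natl.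
apply: (lerXn2r N); rewrite ?nnegrE ?expR_ge0 //.
by rewrite step5 expR_ge1Dx.
Qed.

Lemma sum_ab (y : R) (l : R) :
  \sum_(a : bool) \sum_(b : bool) expR (y * (sgn R a * sgn R b * l)) <= 4 * expR ((y * l) ^+ 2 / 2).
Proof.
rewrite !big_bool /= /sgn.
have e1 : y * (1 * 1 * l) = y * l by ring.
have e2 : y * (1 * -1 * l) = - (y * l) by ring.
have e3 : y * (-1 * 1 * l) = - (y * l) by ring.
have e4 : y * (-1 * -1 * l) = y * l by ring.
rewrite e1 e2 e3 e4.
have := @cosh_le R (y * l).
set a := expR (y * l); set b := expR (- (y * l)); set c := expR _.
move=> h; lra.
Qed.


Lemma main_bound :
  \sum_(w : {ffun 'I_N -> Edge CC}) PP1 sigma eps w ^+ 2 * Dr ^+ N <=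
  expR (N%:R ^+ 2 * eps ^+ 4 / (2 * Dr) * alpha CC R sigma).
Proof.
set M : R := (2 ^ size sigma)%:R.
have M_gt0 : 0 < M by rewrite ltr0n expn_gt0.
have iid_ge0 (b : {ffun Edge CC -> bool}) (w : {ffun 'I_N -> Edge CC}) : 0 <= iid (q_b b eps) w by apply: prodr_ge0 => j _; exact: q_ge0.
have P1le (w : {ffun 'I_N -> Edge CC}) : 0 <= PP1 sigma eps w <= M^-1 * \sum_(s : T) iid (qs s) w.
  apply/andP; split.
    by apply: mulr_ge0; [rewrite invr_ge0 ltW // | apply: sumr_ge0 => b _; apply: iid_ge0].
  rewrite /PP1 -/M ler_wpM2l ?invr_ge0 ?(ltW M_gt0) //.
  rewrite /Bset.
  have := @sum_imset_le R _ _ (@b_of X CC sigma) {: T} (fun b => iid (q_b b eps) w) (fun b => iid_ge0 b w).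
  move=> H; apply: le_trans H _.
  by rewrite le_eqVlt; apply/orP; left; apply/eqP; apply: eq_bigl.
apply: le_trans (_ : \sum_w (M^-1 * \sum_(s : T) iid (qs s) w) ^+ 2 * Dr ^+ N <= _).
  apply: ler_sum => w _; rewrite ler_wpM2r ?exprn_ge0 ?(ltW Dr_gt0) //.
  have /andP [h0 h1] := P1le w.
  by rewrite !expr2; apply: ler_pM.
rewrite (eq_bigr (fun w => M^-1 ^+ 2 * \sum_(s : T) \sum_(t : T)
     (iid (qs s) w * iid (qs t) w * Dr ^+ N))); last first.
  move=> w _; rewrite exprMn -mulrA; congr (_ * _).
  rewrite expr2 mulr_suml mulr_suml; apply: eq_bigr => s _.
  by rewrite mulr_sumr mulr_suml; apply: eq_bigr => t _.
rewrite -mulr_sumr exchange_big /=.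
under eq_bigr => s _ do rewrite exchange_big /=.
under eq_bigr => s _ do under eq_bigr => t _ do rewrite step4.
apply: le_trans (_ : M^-1 ^+ 2 * \sum_(s : T) \sum_(t : T)
   \prod_(i < size sigma) expR (lam * (sgn R (tnth s i) * sgn R (tnth t i) * L i)) <= _).
  rewrite ler_wpM2l ?exprn_ge0 ?invr_ge0 ?(ltW M_gt0) //.
  by apply: ler_sum => s _; apply: ler_sum => t _; exact: step6.
rewrite (sum_tuple2 (fun i a b => expR (lam * (sgn R a * sgn R b * L i)))).
apply: le_trans (_ : M^-1 ^+ 2 * \prod_(i < size sigma) (4 * expR ((lam * L i) ^+ 2 / 2)) <= _).
  rewrite ler_wpM2l ?exprn_ge0 ?invr_ge0 ?(ltW M_gt0) //.
  apply: ler_prod => i _; apply/andP; split; last exact: sum_ab.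
  by apply: sumr_ge0 => a _; apply: sumr_ge0 => b _; exact: expR_ge0.
rewrite big_split /= prodr_const card_ord -expR_sum mulrA.
have -> : M^-1 ^+ 2 * 4 ^+ size sigma = 1.
  rewrite /M natrX exprVn -exprM mulnC exprM.
  have -> : (2 : R) ^+ 2 = 4 by rewrite expr2 -natrM.
  by rewrite mulVf // expf_neq0 // pnatr_eq0.
rewrite mul1r ler_expR le_eqVlt; apply/orP; left; apply/eqP.
rewrite /alpha (big_nth [::]) big_mkord !mulr_sumr; apply: eq_bigr => i _.
by rewrite /lam /L -/Dr; field.
Qed.

End Main.

Theorem lemma5p2 (X : finType) (CC : {set {set X}}) (R : realType)
  (sigma : seq (seq (X * {set X}))) (eps : R) (N : nat) :
  (* standing assumptions on C *)
  (forall S, S \in CC -> 2 <= #|S|)%N ->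
  (#|X| <= #|CC|)%N ->
  G_connected CC ->
  (forall S, S \in CC -> ~~ odd #|S|) ->
  (forall x : X, ~~ odd #|[set S in CC | x \in S]|) ->
  (* sigma is a cycle decomposition of G_C *)
  is_cycle_decomposition CC sigma ->
  0 <= eps <= 1 ->
  (0 < N)%N ->
  chi2 (@PP1 X CC R sigma eps N) (@PP0 X CC R N) + 1
    <= expR ((N%:R) ^+ 2 * eps ^+ 4 / (2 * (dd CC)%:R) * alpha CC R sigma).
Proof.
move=> _ _ _ _ _ Hdec /andP[He0 He1] HN.
rewrite /chi2 subrK.
case: (posnP (dd CC)) => [D0 | HD].
  rewrite big1 ?expR_ge0 // => w _; exfalso.
  have := card0_eq (etrans (card_Edge CC) D0) (w (Ordinal HN)).
  by rewrite !inE.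
have Dn0 : ((dd CC)%:R : R) != 0 by rewrite pnatr_eq0 -lt0n.
rewrite (eq_bigr (fun w => PP1 sigma eps w ^+ 2 * (dd CC)%:R ^+ N)); last first.
  move=> w _; rewrite /PP0 /iid /p0 prodr_const card_ord exprVn.
  by field; rewrite expf_neq0.
exact: main_bound.
Qed.
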